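(* Let $\alpha\in\mathbb{R}$. Then $\alpha$ is a weak-Bryuno number if and only if $\alpha$ is a Bryuno number.
   Context: Dimension $d=1$. For $x\in\mathbb{R}$, $\|x\|:=\min_{l\in\mathbb{Z}}|x-l|$. Bryuno: with $\Omega_\alpha(N):=\min_{\ell\in\mathbb{Z},\,0<|\ell|\le N}\|\alpha\ell\|$, $\alpha$ is a Bryuno number if $\sum_{k\ge1}2^{-k}\log\frac{1}{\Omega_\alpha(2^k)}<+\infty$ (this requires $\alpha$ irrational). Weak-Bryuno (with $\mathbb{S}^0=\{-1,1\}$): for $\ell\in\mathbb{Z}$, $\beta\in\{\pm1\}$, $\delta\in\mathbb{R}$, $\Phi(\ell,\beta,\delta):=e^{2\pi|\ell\beta|\delta}=e^{2\pi|\ell|\delta}$. Given $C>0$, $N\in\mathbb{N}$ and $c=\{c_n\}\in\ell^1(\mathbb{R}^+)$ let $g(c,n,\ell):=1$ if $2^n<|\ell|\le2^{n+1}$, $:=e^{-2^nc_n}$ if $0<|\ell|\le2^n$, $:=0$ otherwise. Fix $\mathfrak{d}>0$, set $\delta_{\beta,n}:=\mathfrak{d}$ for $n=1,\dots,N$, and for $n\ge N$ recursively $\tilde\delta_{\beta,n+1}:=\max\{\delta\le\delta_{\beta,n}:\frac{\Phi(\ell,\beta,\delta)}{\|\alpha\ell\|}g(c,n,\ell)\le\max_{\bar\beta\in\{\pm1\}}\Phi(\ell,\bar\beta,\delta_{\bar\beta,n})\ \forall\ell\in\mathbb{Z},\ 0<|\ell|\le2^{n+1}\}$ and $\delta_{\beta,n+1}:=\min_{\bar\beta\in\{\pm1\},|\beta-\bar\beta|<e^{-2^nc_n}}\tilde\delta_{\bar\beta,n+1}$.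 $\alpha$ is a weak-Bryuno number if for every $\mathfrak{d}>0$ there exist $C$, $c$, $N$ with $\inf_{\beta\in\{\pm1\}}\inf_{n\in\mathbb{N}}\delta_{\beta,n}>0$. *)

(* Defs.v *)
From Stdlib Require Import Reals Lra Lia ZArith List.
From Coquelicot Require Import Coquelicot.
Open Scope R_scope.

(** ‖x‖ = min_{l ∈ Z} |x - l| : distance to the nearest integer.
    [up x] is the least integer > x, so [up x - 1] is the floor of x and the
    nearest integer is one of [up x - 1], [up x]. *)
Definition dist_int (x : R) : R :=
  Rmin (x - IZR (up x - 1)) (IZR (up x) - x).

Lemma dist_int_le (x : R) (l : Z) : dist_int x <= Rabs (x - IZR l).
Proof.
  unfold dist_int. destruct (archimed x) as [H1 H2].
  rewrite minus_IZR.
  destruct (Z_le_gt_dec l (up x - 1)) as [Hl | Hl].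
  - apply IZR_le in Hl. rewrite minus_IZR in Hl.
    eapply Rle_trans; [apply Rmin_l|]. rewrite Rabs_right; lra.
  - assert (Hl' : (up x <= l)%Z) by lia. apply IZR_le in Hl'.
    eapply Rle_trans; [apply Rmin_r|]. rewrite Rabs_left1; lra.
Qed.

Lemma dist_int_attained (x : R) : exists l : Z, dist_int x = Rabs (x - IZR l).
Proof.
  unfold dist_int. destruct (archimed x) as [H1 H2].
  apply Rmin_case.
  - exists (up x - 1)%Z. rewrite minus_IZR in *. rewrite Rabs_right; lra.
  - exists (up x). rewrite Rabs_left1; lra.
Qed.

Definition nonzero_range (N : nat) : list Z :=
  filter (fun l => negb (Z.eqb l 0))
    (map (fun i => (Z.of_nat i - Z.of_nat N)%Z) (seq 0 (2 * N + 1))).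

(** Ω_α(N) = min_{0 < |l| <= N} ‖α l‖ (for N >= 1 the list is nonempty and all
    values are <= 1/2, so the initial value 1 of the fold is never the result). *)
Definition Omega (alpha : R) (N : nat) : R :=
  fold_right Rmin 1 (map (fun l => dist_int (alpha * IZR l)) (nonzero_range N)).

(** Bryuno: the series Σ_{k>=1} 2^{-k} log(1/Ω_α(2^k)) is finite
    (which requires Ω_α(2^k) > 0 for all k >= 1, i.e. α irrational). *)
Definition Bryuno (alpha : R) : Prop :=
  (forall k : nat, (1 <= k)%nat -> 0 < Omega alpha (2 ^ k)) /\
  ex_series (fun k : nat => / 2 ^ (k + 1) * ln (/ Omega alpha (2 ^ (k + 1)))).

Definition Phi (l : Z) (beta delta : R) : R :=
  exp (2 * PI * Rabs (IZR l * beta) * delta).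

Definition g (c : nat -> R) (n : nat) (l : Z) : R :=
  let a := Rabs (IZR l) in
  if Rlt_dec (2 ^ n) a then (if Rle_dec a (2 ^ (n + 1)) then 1 else 0)
  else if Rlt_dec 0 a then exp (- (2 ^ n * c n))
  else 0.

Definition S0 (beta : R) : Prop := beta = 1 \/ beta = -1.

(** The admissibility condition defining δ̃_{β,n+1}: δ <= δ_{β,n} and
    Φ(l,β,δ)/‖αl‖ · g(c,n,l) <= max_{β̄} Φ(l,β̄,δ_{β̄,n}) for all 0<|l|<=2^{n+1};
    the quotient by ‖αl‖ is required to be a (finite) real, i.e. ‖αl‖ > 0. *)
Definition admissible (alpha : R) (c : nat -> R) (delta : R -> nat -> R)
    (beta : R) (n : nat) (d : R) : Prop :=
  d <= delta beta n /\
  forall l : Z, 0 < Rabs (IZR l) <= 2 ^ (n + 1) ->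
    0 < dist_int (alpha * IZR l) /\
    Phi l beta d / dist_int (alpha * IZR l) * g c n l
      <= Rmax (Phi l 1 (delta 1 n)) (Phi l (-1) (delta (-1) n)).

Definition delta_recursion (alpha dd : R) (c : nat -> R) (N : nat)
    (delta deltat : R -> nat -> R) : Prop :=
  (forall beta n, S0 beta -> (1 <= n <= N)%nat -> delta beta n = dd) /\
  (forall beta n, S0 beta -> (N <= n)%nat ->
     (* δ̃_{β,n+1} = max { δ : admissible δ } *)
     admissible alpha c delta beta n (deltat beta (n + 1)%nat) /\
     (forall d, admissible alpha c delta beta n d -> d <= deltat beta (n + 1)%nat)) /\
  (forall beta n, S0 beta -> (N <= n)%nat ->
     (* δ_{β,n+1} = min over β̄ ∈ S^0 with |β - β̄| < e^{-2^n c_n} of δ̃_{β̄,n+1} *)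
     (forall betab, S0 betab -> Rabs (beta - betab) < exp (- (2 ^ n * c n)) ->
        delta beta (n + 1)%nat <= deltat betab (n + 1)%nat) /\
     (exists betab, S0 betab /\ Rabs (beta - betab) < exp (- (2 ^ n * c n)) /\
        delta beta (n + 1)%nat = deltat betab (n + 1)%nat)).

Definition weak_Bryuno (alpha : R) : Prop :=
  forall dd : R, 0 < dd ->
  exists C : R, 0 < C /\
  exists c : nat -> R, (forall n, 0 <= c n) /\ ex_series c /\
  exists N : nat, (1 <= N)%nat /\
  exists delta deltat : R -> nat -> R,
    delta_recursion alpha dd c N delta deltat /\
    exists eps : R, 0 < eps /\
      forall beta n, S0 beta -> (1 <= n)%nat -> eps <= delta beta n.

(* Main.v *)
Require Import Defs.
From Stdlib Require Import Reals Lra Lia ZArith ClassicalEpsilon List.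
From Coquelicot Require Import Coquelicot.
Open Scope R_scope.

Lemma in_nzr (M : nat) (l : Z) :
  In l (nonzero_range M) <-> l <> 0%Z /\ (Z.abs l <= Z.of_nat M)%Z.
Proof.
  unfold nonzero_range. rewrite filter_In, in_map_iff. split.
  - intros [[i [Hi Hin]] Hn]. apply in_seq in Hin.
    apply Bool.negb_true_iff, Z.eqb_neq in Hn. split; [exact Hn| lia].
  - intros [Hn Ha]. split.
    + exists (Z.to_nat (l + Z.of_nat M)). split.
      * rewrite Z2Nat.id; lia.
      * apply in_seq. lia.
    + apply Bool.negb_true_iff, Z.eqb_neq. exact Hn.
Qed.

Lemma fold_le (f : Z -> R) (s : list Z) x :
  In x s -> fold_right Rmin 1 (map f s) <= f x.
Proof.
  induction s as [|a s IH]; simpl; [tauto|].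
  intros [->|H]. apply Rmin_l. eapply Rle_trans; [apply Rmin_r| auto].
Qed.

Lemma fold_le1 (f : Z -> R) (s : list Z) : fold_right Rmin 1 (map f s) <= 1.
Proof. induction s; simpl. lra. eapply Rle_trans; [apply Rmin_r| auto]. Qed.

Lemma fold_cases (f : Z -> R) (s : list Z) :
  fold_right Rmin 1 (map f s) = 1 \/
  exists x, In x s /\ fold_right Rmin 1 (map f s) = f x.
Proof.
  induction s as [|a s IH]; simpl; [auto|].
  apply Rmin_case.
  - right. exists a. auto.
  - destruct IH as [H|[x [H1 H2]]]; auto. right. exists x; auto.
Qed.

Lemma fold_pos (f : Z -> R) (s : list Z) :
  (forall x, In x s -> 0 < f x) -> 0 < fold_right Rmin 1 (map f s).
Proof.
  induction s as [|a s IH]; simpl; intros H. lra.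
  apply Rmin_pos; auto.
Qed.

Lemma pow2_IZR k : 2 ^ k = IZR (Z.of_nat (2 ^ k)).
Proof. rewrite <- INR_IZR_INZ, pow_INR. replace (INR 2) with 2 by (simpl; ring). reflexivity. Qed.

Lemma range_iff (l : Z) k :
  0 < Rabs (IZR l) <= 2 ^ k <-> (1 <= Z.abs l <= Z.of_nat (2 ^ k))%Z.
Proof.
  rewrite <- abs_IZR, pow2_IZR. split.
  - intros [H1 H2]. apply lt_IZR in H1. apply le_IZR in H2. lia.
  - intros [H1 H2]. split. apply IZR_lt; lia. apply IZR_le; lia.
Qed.

Lemma Omega_le alpha k l : l <> 0%Z -> (Z.abs l <= Z.of_nat (2^k))%Z ->
  Omega alpha (2^k) <= dist_int (alpha * IZR l).
Proof.
  intros H1 H2. unfold Omega. apply (fold_le (fun l => dist_int (alpha * IZR l))).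
  apply in_nzr; auto.
Qed.

Lemma Omega_le1 alpha M : Omega alpha M <= 1.
Proof. apply fold_le1. Qed.

Lemma Omega_cases alpha k : Omega alpha (2^k) = 1 \/
  exists l, l <> 0%Z /\ (Z.abs l <= Z.of_nat (2^k))%Z /\ Omega alpha (2^k) = dist_int (alpha * IZR l).
Proof.
  destruct (fold_cases (fun l => dist_int (alpha * IZR l)) (nonzero_range (2^k))) as [H|[x [H1 H2]]].
  left; exact H. right. apply in_nzr in H1. exists x. tauto.
Qed.

Lemma Omega_pos alpha M : (forall l, l <> 0%Z -> (Z.abs l <= Z.of_nat M)%Z -> 0 < dist_int (alpha * IZR l)) ->
  0 < Omega alpha M.
Proof.
  intros H. apply fold_pos. intros x Hx. apply in_nzr in Hx. apply H; tauto.
Qed.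

Lemma Phi_S0 l beta d : S0 beta -> Phi l beta d = exp (2 * PI * Rabs (IZR l) * d).
Proof.
  unfold Phi. intros Hb. replace (Rabs (IZR l * beta)) with (Rabs (IZR l)); [reflexivity|].
  rewrite Rabs_mult. destruct Hb as [-> | ->]. rewrite Rabs_R1; ring.
  rewrite (Rabs_left (-1)) by lra; ring.
Qed.

Lemma g_top c n l : 2 ^ n < Rabs (IZR l) <= 2 ^ (n+1) -> g c n l = 1.
Proof.
  intros [H1 H2]. unfold g. destruct (Rlt_dec (2^n) (Rabs (IZR l))); [|lra].
  destruct (Rle_dec (Rabs (IZR l)) (2^(n+1))); lra.
Qed.

Lemma g_low c n l : 0 < Rabs (IZR l) <= 2 ^ n -> g c n l = exp (- (2 ^ n * c n)).
Proof.
  intros [H1 H2]. unfold g. destruct (Rlt_dec (2^n) (Rabs (IZR l))); [lra|].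
  destruct (Rlt_dec 0 (Rabs (IZR l))); lra.
Qed.

Lemma thr_one a K R : 0 < a -> 0 < K -> 0 < R ->
  exists b, forall d, exp (a * d) * K <= R <-> d <= b.
Proof.
  intros Ha HK HR. exists (ln (R / K) / a). intros d.
  assert (HRK : 0 < R / K) by (apply Rdiv_lt_0_compat; auto).
  split; intro H.
  - assert (H1 : exp (a * d) <= R / K).
    { apply (Rmult_le_reg_r K); auto. unfold Rdiv. rewrite Rmult_assoc, Rinv_l by lra. lra. }
    rewrite <- (exp_ln (R/K)) in H1 by auto.
    assert (a * d <= ln (R / K)).
    { destruct (Rle_lt_dec (a*d) (ln (R/K))); auto. apply exp_increasing in r. lra. }
    apply (Rmult_le_reg_l a); auto. unfold Rdiv. rewrite (Rmult_comm (ln _)), <- Rmult_assoc, Rinv_r by lra. lra.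
  - assert (a * d <= ln (R / K)).
    { apply (Rmult_le_compat_l a) in H; [|lra]. unfold Rdiv in H.
      rewrite (Rmult_comm (ln _)), <- Rmult_assoc, Rinv_r in H by lra. lra. }
    assert (exp (a * d) <= R / K).
    { rewrite <- (exp_ln (R/K)) by auto. destruct (Req_dec (a*d) (ln (R/K))) as [E|E].
      rewrite E; lra. left. apply exp_increasing. lra. }
    apply (Rmult_le_compat_r K) in H1; [|lra]. unfold Rdiv in H1.
    rewrite Rmult_assoc, Rinv_l in H1 by lra. lra.
Qed.

Lemma thr_fin (P : Z -> R -> Prop) x (M : nat) :
  (forall l, (1 <= Z.abs l <= Z.of_nat M)%Z -> exists b, forall d, P l d <-> d <= b) ->
  exists m, forall d, (d <= x /\ forall l, (1 <= Z.abs l <= Z.of_nat M)%Z -> P l d) <-> d <= m.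
Proof.
  induction M as [|M IH]; intros H.
  - exists x. intros d. split. tauto. intros Hd; split; auto. intros l Hl. lia.
  - destruct IH as [m Hm]. { intros l Hl. apply H. lia. }
    destruct (H (Z.of_nat (S M))) as [b1 Hb1]. lia.
    destruct (H (- Z.of_nat (S M))%Z) as [b2 Hb2]. lia.
    exists (Rmin m (Rmin b1 b2)). intros d. split.
    + intros [Hx Hl]. apply Rmin_glb. apply Hm. split; auto. intros l Hl'. apply Hl. lia.
      apply Rmin_glb. apply Hb1, Hl. lia. apply Hb2, Hl. lia.
    + intros Hd. assert (Hd1 : d <= m) by (eapply Rle_trans; [exact Hd| apply Rmin_l]).
      assert (Hd2 : d <= b1) by (eapply Rle_trans; [exact Hd| eapply Rle_trans; [apply Rmin_r| apply Rmin_l]]).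
      assert (Hd3 : d <= b2) by (eapply Rle_trans; [exact Hd| eapply Rle_trans; [apply Rmin_r| apply Rmin_r]]).
      apply Hm in Hd1. destruct Hd1 as [Hx Hl]. split; auto.
      intros l Hl'. destruct (Z.eq_dec (Z.abs l) (Z.of_nat (S M))) as [E|E].
      * destruct (Z.abs_spec l) as [[_ E2]|[_ E2]].
        -- replace l with (Z.of_nat (S M)) by lia. apply Hb1; auto.
        -- replace l with (- Z.of_nat (S M))%Z by lia. apply Hb2; auto.
      * apply Hl. lia.
Qed.

Lemma exp_le x y : x <= y -> exp x <= exp y.
Proof. intros [H|H]. left; apply exp_increasing; auto. rewrite H; lra. Qed.

Lemma PI_gt2 : 2 < PI.
Proof. generalize PI2_1. lra. Qed.

Lemma ln_inv_nonneg w : 0 < w <= 1 -> 0 <= ln (/ w).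
Proof. intros [H1 H2]. rewrite ln_Rinv by auto. assert (ln w <= ln 1) by (apply ln_le; auto). rewrite ln_1 in H. lra. Qed.

Lemma exp_neg_ln_inv w : 0 < w -> exp (- ln (/ w)) = w.
Proof. intros H. rewrite ln_Rinv by auto. rewrite Ropp_involutive. apply exp_ln; auto. Qed.

Lemma g_pos c n l : 0 < Rabs (IZR l) <= 2 ^ (n+1) -> 0 < g c n l.
Proof.
  intros [H1 H2]. destruct (Rlt_dec (2^n) (Rabs (IZR l))) as [H|H].
  rewrite g_top; lra. rewrite g_low. apply exp_pos. lra.
Qed.

Lemma adm_thr alpha c x n :
  (forall l, 0 < Rabs (IZR l) <= 2 ^ (n+1) -> 0 < dist_int (alpha * IZR l)) ->
  exists m, forall d, admissible alpha c (fun _ _ => x) 1 n d <-> d <= m.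
Proof.
  intros Hpos.
  set (P := fun l d => Phi l 1 d / dist_int (alpha * IZR l) * g c n l
      <= Rmax (Phi l 1 x) (Phi l (-1) x)).
  destruct (thr_fin P x (2 ^ (n+1))) as [m Hm].
  - intros l Hl. apply range_iff in Hl.
    assert (HD := Hpos l Hl). assert (Hg := g_pos c n l Hl).
    destruct (thr_one (2 * PI * Rabs (IZR l * 1)) (/ dist_int (alpha * IZR l) * g c n l)
       (Rmax (Phi l 1 x) (Phi l (-1) x))) as [b Hb].
    + rewrite Rmult_1_r. generalize PI_RGT_0. intros. apply Rmult_lt_0_compat; lra.
    + apply Rmult_lt_0_compat; auto. apply Rinv_0_lt_compat; auto.
    + eapply Rlt_le_trans; [|apply Rmax_l]. apply exp_pos.
    + exists b. intros d. rewrite <- Hb. unfold P, Phi, Rdiv. rewrite Rmult_assoc. tauto.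
  - exists m. intros d. rewrite <- Hm. unfold admissible. split.
    + intros [H1 H2]. split; auto. intros l Hl. apply range_iff in Hl. apply H2; auto.
    + intros [H1 H2]. split; auto. intros l Hl. split; auto. apply H2. apply range_iff; auto.
Qed.

Definition cB alpha n := Rmax 0 (/ 2 ^ n * ln (/ Omega alpha (2 ^ n))).
Definition tB alpha k := / 2 ^ (k + 1) * ln (/ Omega alpha (2 ^ (k + 1))).

Lemma tB_nonneg alpha k : 0 < Omega alpha (2 ^ (k+1)) -> 0 <= tB alpha k.
Proof.
  intros H. unfold tB. apply Rmult_le_pos. left; apply Rinv_0_lt_compat, pow_lt; lra.
  apply ln_inv_nonneg. split; auto. apply Omega_le1.
Qed.

Lemma dist_pos_of_Omega alpha k l : 0 < Omega alpha (2 ^ k) ->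
  0 < Rabs (IZR l) <= 2 ^ k -> 0 < dist_int (alpha * IZR l).
Proof.
  intros H Hl. apply range_iff in Hl. eapply Rlt_le_trans; [exact H|].
  apply Omega_le; lia.
Qed.

Lemma step_lb alpha c x n :
  0 < Omega alpha (2 ^ n) -> 0 < Omega alpha (2 ^ (n+1)) ->
  / 2 ^ n * ln (/ Omega alpha (2 ^ n)) <= c n ->
  admissible alpha c (fun _ _ => x) 1 n (x - tB alpha n).
Proof.
  intros Hn Hn1 Hc. assert (Ht := tB_nonneg alpha n Hn1).
  split. lra.
  intros l Hl. assert (HD := dist_pos_of_Omega _ _ _ Hn1 Hl). split; auto.
  rewrite !Phi_S0 by (red; auto).
  rewrite Rmax_left by lra.
  set (a := 2 * PI * Rabs (IZR l)).
  assert (Ha : 0 < a). { unfold a. generalize PI_RGT_0; intros. apply Rmult_lt_0_compat; lra. }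
  replace (exp (a * (x - tB alpha n))) with (exp (a * x) * exp (- (a * tB alpha n)))
    by (rewrite <- exp_plus; f_equal; ring).
  assert (Hkey : exp (- (a * tB alpha n)) * g c n l <= dist_int (alpha * IZR l)).
  { destruct (Rlt_dec (2^n) (Rabs (IZR l))) as [Hlt|Hge].
    - rewrite g_top by lra. rewrite Rmult_1_r.
      set (L := ln (/ Omega alpha (2 ^ (n + 1)))).
      assert (HL : 0 <= L) by (apply ln_inv_nonneg; split; auto; apply Omega_le1).
      apply Rle_trans with (exp (- L)).
      + apply exp_le. apply Ropp_le_contravar.
        unfold tB. fold L. rewrite pow_add. simpl (2 ^ 1).
        assert (Hp : 0 < 2 ^ n) by (apply pow_lt; lra).
        unfold a. generalize PI_gt2; intros.
        replace (2 * PI * Rabs (IZR l) * (/ (2 ^ n * (2 * 1)) * L))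
          with (PI * L * (Rabs (IZR l) / 2 ^ n)) by (field; lra).
        assert (1 <= Rabs (IZR l) / 2 ^ n).
        { apply (Rmult_le_reg_r (2^n)); auto. unfold Rdiv. rewrite Rmult_assoc, Rinv_l by lra. lra. }
        assert (L <= PI * L) by nra. nra.
      + unfold L. rewrite exp_neg_ln_inv by auto.
        apply range_iff in Hl. apply Omega_le; lia.
    - rewrite g_low by lra.
      apply Rle_trans with (1 * exp (- (2 ^ n * c n))).
      + apply Rmult_le_compat_r. left; apply exp_pos.
        rewrite <- exp_0. apply exp_le. assert (0 <= a * tB alpha n) by nra. lra.
      + rewrite Rmult_1_l. apply Rle_trans with (exp (- ln (/ Omega alpha (2 ^ n)))).
        * apply exp_le. apply Ropp_le_contravar.
          assert (Hp : 0 < 2 ^ n) by (apply pow_lt; lra).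
          apply (Rmult_le_compat_l (2^n)) in Hc; [|lra].
          rewrite <- Rmult_assoc, Rinv_r, Rmult_1_l in Hc by lra. exact Hc.
        * rewrite exp_neg_ln_inv by auto.
          assert (Hl' : 0 < Rabs (IZR l) <= 2 ^ n) by lra.
          apply range_iff in Hl'. apply Omega_le; lia. }
  unfold Rdiv. 
  replace (exp (a * x) * exp (- (a * tB alpha n)) * / dist_int (alpha * IZR l) * g c n l)
    with (exp (a * x) * (exp (- (a * tB alpha n)) * g c n l) * / dist_int (alpha * IZR l)) by ring.
  apply (Rmult_le_reg_r (dist_int (alpha * IZR l))); auto.
  rewrite Rmult_assoc, Rinv_l, Rmult_1_r by lra.
  apply Rmult_le_compat_l. left; apply exp_pos. exact Hkey.
Qed.

Lemma sum_mono (t : nat -> R) : (forall k, 0 <= t k) ->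
  forall n m, (n <= m)%nat -> sum_f_R0 t n <= sum_f_R0 t m.
Proof.
  intros Ht n m Hnm. induction Hnm. lra. simpl. specialize (Ht (S m)). lra.
Qed.

Lemma psum_le (t : nat -> R) S : (forall k, 0 <= t k) -> is_series t S ->
  forall n, sum_f_R0 t n <= S.
Proof.
  intros Ht HS n.
  assert (H := is_lim_seq_le_loc (fun _ => sum_f_R0 t n) (sum_n t) (sum_f_R0 t n) S).
  simpl in H. apply H.
  - exists n. intros m Hm. rewrite sum_n_Reals. apply sum_mono; auto.
  - apply is_lim_seq_const.
  - exact HS.
Qed.

Fixpoint Dseq (st : R -> nat -> R) (dd : R) (N n : nat) : R :=
  match n with
  | O => dd
  | S k => if Nat.ltb k N then dd else st (Dseq st dd N k) k
  end.

Lemma adm_beta alpha c (D : nat -> R) beta n d : S0 beta ->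
  admissible alpha c (fun _ k => D k) beta n d <-> admissible alpha c (fun _ _ => D n) 1 n d.
Proof.
  intros Hb. assert (E : forall l, Phi l beta d = Phi l 1 d).
  { intros l. rewrite !Phi_S0; auto. red; auto. }
  unfold admissible. cbv beta. setoid_rewrite E. tauto.
Qed.

Lemma bryuno_weak alpha : Bryuno alpha -> weak_Bryuno alpha.
Proof.
  intros [HO [Ssum HS]] dd Hdd.
  assert (HOm : forall k, (1 <= k)%nat -> 0 < Omega alpha (2 ^ k)) by exact HO.
  assert (Ht0 : forall k, 0 <= tB alpha k).
  { intros k. apply tB_nonneg. apply HOm. lia. }
  change (is_series (tB alpha) Ssum) in HS.
  exists 1. split; [lra|].
  exists (cB alpha). split; [intros n; apply Rmax_l|]. split.
  { apply ex_series_incr_1. apply ex_series_ext with (tB alpha); [|exists Ssum; exact HS].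
    intros k. unfold cB. rewrite Rmax_right. unfold tB. rewrite Nat.add_1_r. reflexivity.
    rewrite <- Nat.add_1_r. apply Ht0. }
  assert (HS' : is_lim_seq (sum_n (tB alpha)) Ssum) by exact HS. apply is_lim_seq_spec in HS'.
  destruct (HS' (mkposreal (dd/2) ltac:(lra))) as [N0 HN0]. simpl in HN0.
  exists (S N0). split; [lia|].
  set (st := fun x n => epsilon (inhabits 0)
     (fun m => forall d, admissible alpha (cB alpha) (fun _ _ => x) 1 n d <-> d <= m)).
  set (D := Dseq st dd (S N0)).
  assert (Hspec : forall n, (S N0 <= n)%nat -> forall d,
     admissible alpha (cB alpha) (fun _ _ => D n) 1 n d <-> d <= D (S n)).
  { intros n Hn. unfold D at 2. simpl.
    replace (Nat.ltb n (S N0)) with false by (symmetry; apply Nat.ltb_ge; lia).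
    fold D. unfold st. apply epsilon_spec. apply adm_thr.
    intros l Hl. apply (dist_pos_of_Omega _ (n+1)); auto. apply HOm. lia. }
  assert (HD1 : forall n, (1 <= n <= S N0)%nat -> D n = dd).
  { intros [|n] Hn. lia. unfold D; simpl.
    replace (Nat.ltb n (S N0)) with true by (symmetry; apply Nat.ltb_lt; lia). reflexivity. }
  exists (fun _ k => D k), (fun _ k => D k). split.
  { split; [|split].
    - intros beta n _ Hn. apply HD1; auto.
    - intros beta n Hb Hn. rewrite Nat.add_1_r. split.
      + apply adm_beta; auto. apply (Hspec n Hn); auto. lra.
      + intros d Hd. apply adm_beta in Hd; auto. apply (Hspec n Hn); auto.
    - intros beta n Hb Hn. split.
      + intros; lra.
      + exists beta. split; auto. split; [|reflexivity].
        rewrite Rminus_diag, Rabs_R0. apply exp_pos. }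
  assert (Hinv : forall m, dd - (sum_f_R0 (tB alpha) (N0 + m) - sum_f_R0 (tB alpha) N0) <= D (S N0 + m)%nat).
  { induction m as [|m IH].
    - rewrite Nat.add_0_r, HD1 by lia. lra.
    - rewrite Nat.add_succ_r. simpl (sum_f_R0 _ (S _)).
      assert (Hs := Hspec (S N0 + m)%nat ltac:(lia) (D (S N0 + m)%nat - tB alpha (S N0 + m)%nat)).
      destruct Hs as [Hs _].
      assert (D (S N0 + m)%nat - tB alpha (S N0 + m)%nat <= D (S (S N0 + m))).
      { apply Hs. apply step_lb. apply HOm; lia. apply HOm; lia. unfold cB. apply Rmax_r. }
      replace (S N0 + S m)%nat with (S (S N0 + m)) by lia.
      replace (S N0 + m)%nat with (S (N0 + m)) in * by lia. lra. }
  exists (dd / 2). split; [lra|].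
  intros beta n _ Hn.
  destruct (Nat.le_gt_cases n (S N0)) as [Hle|Hgt].
  - rewrite HD1 by lia. lra.
  - replace n with (S N0 + (n - S N0))%nat by lia.
    eapply Rle_trans; [|apply Hinv].
    assert (H1 := HN0 N0 (le_n _)). rewrite sum_n_Reals in H1.
    assert (H2 := psum_le _ _ Ht0 HS (N0 + (n - S N0))).
    apply Rabs_def2 in H1. lra.
Qed.

Lemma S0_1 : S0 1. Proof. left; reflexivity. Qed.
Lemma S0_m1 : S0 (-1). Proof. right; reflexivity. Qed.

Lemma weak_bryuno alpha : weak_Bryuno alpha -> Bryuno alpha.
Proof.
  intros W.
  destruct (W 1 ltac:(lra)) as [C [HC [c [Hc0 [_ [N [HN [delta [deltat
     [[H1 [H2 H3]] [eps [Heps Hlb]]]]]]]]]]]].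
  set (M := fun k => Rmax (delta 1 k) (delta (-1) k)).
  assert (Fle : forall beta n, S0 beta -> (N <= n)%nat -> delta beta (n+1)%nat <= deltat beta (n+1)%nat).
  { intros beta n Hb Hn. apply (proj1 (H3 beta n Hb Hn)); auto.
    rewrite Rminus_diag, Rabs_R0. apply exp_pos. }
  assert (Fdt : forall beta n, S0 beta -> (N <= n)%nat -> deltat beta (n+1)%nat <= delta beta n).
  { intros beta n Hb Hn. apply (proj1 (proj1 (H2 beta n Hb Hn))). }
  assert (Fmono : forall n, (N <= n)%nat -> M (n+1)%nat <= M n).
  { intros n Hn. unfold M. apply Rmax_lub.
    - eapply Rle_trans; [apply Fle; auto; apply S0_1|]. eapply Rle_trans; [apply Fdt; auto; apply S0_1|]. apply Rmax_l.
    - eapply Rle_trans; [apply Fle; auto; apply S0_m1|]. eapply Rle_trans; [apply Fdt; auto; apply S0_m1|]. apply Rmax_r. }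
  assert (Fpos : forall l, l <> 0%Z -> 0 < dist_int (alpha * IZR l)).
  { intros l Hl. set (n := (N + Z.abs_nat l)%nat).
    assert (Hp : (n + 1 < 2 ^ (n + 1))%nat) by (apply Nat.pow_gt_lin_r; lia).
    destruct (H2 1 n S0_1 ltac:(lia)) as [[_ Had] _].
    apply (Had l). apply range_iff. lia. }
  assert (HOp : forall k, 0 < Omega alpha k).
  { intros k. apply Omega_pos. intros l Hl _. apply Fpos; auto. }
  assert (Ht0 : forall k, 0 <= tB alpha k) by (intros; apply tB_nonneg; auto).
  assert (F4 : forall n l, (N <= n)%nat -> 2 ^ n < Rabs (IZR l) <= 2 ^ (n+1) ->
     exp (2 * PI * Rabs (IZR l) * M (n+1)%nat) <=
     dist_int (alpha * IZR l) * exp (2 * PI * Rabs (IZR l) * M n)).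
  { intros n l Hn Hl.
    set (a := 2 * PI * Rabs (IZR l)).
    assert (Ha : 0 <= a). { unfold a. generalize PI_RGT_0. intros. assert (0 <= Rabs (IZR l)) by apply Rabs_pos. nra. }
    assert (Hb : forall beta, S0 beta -> exp (a * delta beta (n+1)%nat) <= dist_int (alpha * IZR l) * exp (a * M n)).
    { intros beta Hbeta.
      destruct (H2 beta n Hbeta Hn) as [[_ Had] _].
      assert (Hpn : 0 < 2 ^ n) by (apply pow_lt; lra).
      destruct (Had l ltac:(lra)) as [HD Hineq].
      rewrite (g_top c n l Hl), Rmult_1_r, !Phi_S0 in Hineq by (auto; apply S0_1 || apply S0_m1).
      fold a in Hineq.
      assert (Hmax : Rmax (exp (a * delta 1 n)) (exp (a * delta (-1) n)) <= exp (a * M n)).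
      { apply Rmax_lub; apply exp_le; apply Rmult_le_compat_l; auto; unfold M. apply Rmax_l. apply Rmax_r. }
      assert (exp (a * deltat beta (n+1)%nat) <= dist_int (alpha * IZR l) * exp (a * M n)).
      { apply (Rmult_le_reg_r (/ dist_int (alpha * IZR l))). apply Rinv_0_lt_compat; auto.
        rewrite (Rmult_comm (dist_int _)), Rmult_assoc, Rinv_r, Rmult_1_r by lra.
        unfold Rdiv in Hineq. lra. }
      eapply Rle_trans; [|exact H]. apply exp_le. apply Rmult_le_compat_l; auto. }
    unfold M at 1. apply Rmax_case; apply Hb. apply S0_1. apply S0_m1. }
  assert (Fstep : forall k, (N <= k)%nat ->
     tB alpha k <= / 2 * (/ 2 ^ k * ln (/ Omega alpha (2 ^ k))) + 2 * PI * (M k - M (k+1)%nat)).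
  { intros k Hk.
    assert (Hd : 0 <= M k - M (k+1)%nat) by (generalize (Fmono k Hk); lra).
    assert (HL0 : 0 <= / 2 ^ k * ln (/ Omega alpha (2 ^ k))).
    { apply Rmult_le_pos. left; apply Rinv_0_lt_compat, pow_lt; lra.
      apply ln_inv_nonneg. split; auto. apply Omega_le1. }
    assert (Hpk : 0 < 2 ^ k) by (apply pow_lt; lra).
    assert (HPI := PI_gt2).
    destruct (Omega_cases alpha (k+1)) as [E | [l [Hl0 [Hlab E]]]].
    - unfold tB. rewrite E, Rinv_1, ln_1, Rmult_0_r. nra.
    - destruct (Z_le_gt_dec (Z.abs l) (Z.of_nat (2 ^ k))) as [Hsm | Hbig].
      + assert (Hle : Omega alpha (2 ^ k) <= Omega alpha (2 ^ (k+1))).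
        { rewrite E. apply Omega_le; auto. }
        assert (ln (/ Omega alpha (2 ^ (k+1))) <= ln (/ Omega alpha (2 ^ k))).
        { apply ln_le. apply Rinv_0_lt_compat; auto. apply Rinv_le_contravar; auto. }
        unfold tB. rewrite pow_add. simpl (2 ^ 1).
        replace (/ (2 ^ k * (2 * 1))) with (/ 2 * / 2 ^ k) by (field; lra).
        assert (0 < / 2 * / 2 ^ k) by (apply Rmult_lt_0_compat; [lra| apply Rinv_0_lt_compat; auto]).
        rewrite Rmult_assoc. nra.
      + assert (Hrl : 2 ^ k < Rabs (IZR l) <= 2 ^ (k+1)).
        { rewrite <- abs_IZR, !pow2_IZR. split. apply IZR_lt; lia. apply IZR_le; lia. }
        assert (HF := F4 k l Hk Hrl).
        set (D := dist_int (alpha * IZR l)) in *.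
        assert (HDp : 0 < D) by (apply Fpos; auto).
        set (a := 2 * PI * Rabs (IZR l)) in *.
        assert (Hln : a * M (k+1)%nat <= ln D + a * M k).
        { rewrite <- (ln_exp (a * M (k+1)%nat)), <- (ln_exp (a * M k)), <- ln_mult by (auto; apply exp_pos).
          apply ln_le; auto. apply exp_pos. }
        unfold tB. rewrite E. fold D. rewrite ln_Rinv by auto.
        assert (Ha : a <= 2 * PI * 2 ^ (k+1)) by (unfold a; nra).
        assert (Hq : - ln D <= 2 * PI * 2 ^ (k+1) * (M k - M (k+1)%nat)) by nra.
        assert (Hpk1 : 0 < 2 ^ (k+1)) by (apply pow_lt; lra).
        apply Rle_trans with (2 * PI * (M k - M (k+1)%nat)); [|lra].
        apply (Rmult_le_reg_l (2 ^ (k+1))); auto.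
        rewrite <- Rmult_assoc, Rinv_r, Rmult_1_l by lra. lra. }
  destruct N as [|N0]; [lia|].
  set (C0 := sum_f_R0 (tB alpha) N0 + tB alpha N0).
  assert (Hinv : forall m, sum_f_R0 (tB alpha) (N0 + m) + tB alpha (N0 + m)
     <= C0 + 4 * PI * (M (S N0) - M (S N0 + m)%nat)).
  { induction m as [|m IH].
    - rewrite !Nat.add_0_r. unfold C0. lra.
    - replace (N0 + S m)%nat with (S (N0 + m)) by lia. simpl (sum_f_R0 _ (S _)).
      assert (Hs := Fstep (S (N0 + m)) ltac:(lia)).
      replace (/ 2 ^ S (N0 + m) * ln (/ Omega alpha (2 ^ S (N0 + m)))) with (tB alpha (N0 + m)) in Hs
        by (unfold tB; rewrite Nat.add_1_r; reflexivity).
      replace (S N0 + S m)%nat with (S (N0 + m) + 1)%nat by lia.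
      replace (S N0 + m)%nat with (S (N0 + m)) in IH by lia. lra. }
  assert (HM1 : M (S N0) = 1).
  { unfold M. rewrite !H1; auto using S0_1, S0_m1; try lia. apply Rmax_left; lra. }
  assert (HMe : forall n, (1 <= n)%nat -> eps <= M n).
  { intros n Hn. eapply Rle_trans; [apply (Hlb 1 n S0_1 Hn)| apply Rmax_l]. }
  assert (Hbd : forall K, sum_f_R0 (tB alpha) K <= C0 + 4 * PI).
  { intros K. assert (HPI := PI_RGT_0).
    destruct (Nat.le_gt_cases K N0) as [Hle|Hgt].
    - eapply Rle_trans. apply sum_mono; [exact Ht0| exact Hle].
      unfold C0. generalize (Ht0 N0). lra.
    - replace K with (N0 + (K - N0))%nat by lia.
      assert (H := Hinv (K - N0)%nat). generalize (Ht0 (N0 + (K - N0))%nat).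
      generalize (HMe (S N0 + (K - N0))%nat ltac:(lia)). intros. nra. }
  split.
  - intros k _. apply HOp.
  - change (ex_series (tB alpha)).
    destruct (ex_finite_lim_seq_incr (sum_n (tB alpha)) (C0 + 4 * PI)) as [l Hl].
    + intros n. rewrite !sum_n_Reals. simpl. generalize (Ht0 (S n)). lra.
    + intros n. rewrite sum_n_Reals. apply Hbd.
    + exists l. exact Hl.
Qed.

Theorem mainTheorem3 (alpha : R) : weak_Bryuno alpha <-> Bryuno alpha.
Proof. split. apply weak_bryuno. apply bryuno_weak. Qed.
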